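(* Let $a,b$ be integers with $1\le a\le b$. Then there exists a tree $T$ such that $\tau(T)=a$ and $\beta_p(T)=b$.
   Context: Graphs are finite, simple, connected. Two vertices $u,v$ are twins if $N(u)\setminus\{v\}=N(v)\setminus\{u\}$; the twin number $\tau(G)$ is the maximum cardinality of an equivalence class of the twin relation. For a partition $\Pi=\{S_1,\dots,S_k\}$ of $V(G)$, $r(u|\Pi)=(d(u,S_1),\dots,d(u,S_k))$ with $d(u,S)=\min_{w\in S}d(u,w)$; $\Pi$ is locating if $r(u|\Pi)\ne r(v|\Pi)$ for all distinct $u,v$; $\beta_p(G)$ is the minimum size of a locating partition (for the one-vertex graph, $\tau=\beta_p=1$). *)

(* Defs.v *)
From mathcomp Require Import all_boot.
Set Implicit Arguments. Unset Strict Implicit. Unset Printing Implicit Defensive.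

Section Graphs.
Variable T : finType.
Variable e : rel T.

Definition simple_graph : Prop := symmetric e /\ irreflexive e.

Definition connected_graph : Prop := 0 < #|T| /\ forall x y : T, connect e x y.

Definition acyclic : Prop :=
  forall s : seq T, uniq s -> 3 <= size s -> ~~ cycle e s.

Definition is_tree : Prop := [/\ simple_graph, connected_graph & acyclic].

Definition nbhd (u : T) : {set T} := [set w | e u w].

Definition twins (u v : T) : bool := (nbhd u :\ v) == (nbhd v :\ u).

Definition twin_number : nat := \max_(u : T) #|[set v | twins u v]|.

Definition walk_of_len (u v : T) (k : nat) : bool :=
  [exists p : k.-tuple T, path e u p && (last u p == v)].

(* distance: the least length of a u-v walk (= #|T| if none exists) *)
Definition dist (u v : T) : nat := find (walk_of_len u v) (iota 0 #|T|).

Definition dist_set (u : T) (S : {set T}) : nat := \big[minn/#|T|]_(w in S) dist u w.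

Definition locating_partition (P : {set {set T}}) : Prop :=
  partition P [set: T] /\
  forall u v : T, u != v -> exists2 S, S \in P & dist_set u S != dist_set v S.

Definition partition_dimension (k : nat) : Prop :=
  (exists2 P, locating_partition P & #|P| = k) /\
  forall P, locating_partition P -> k <= #|P|.

End Graphs.

(* Main.v *)
Require Import Defs.
From mathcomp Require Import all_boot.
From mathcomp Require Import zify.
From Stdlib Require Import Classical.
Set Implicit Arguments. Unset Strict Implicit. Unset Printing Implicit Defensive.

Module C.

Lemma find_iota (P : pred nat) n k :
  k < n -> P k -> (forall j, j < k -> ~~ P j) -> find P (iota 0 n) = k.
Proof.
move=> kn Pk Hj.
have -> : n = k + (n - k) by lia.
rewrite iotaD find_cat /=.
have -> : has P (iota 0 k) = false.
  apply/hasP => -[j]; rewrite mem_iota => /andP[_ jk] Pj.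
  by move: (Hj j); rewrite add0n in jk; move/(_ jk); rewrite Pj.
rewrite size_iota.
have -> : n - k = (n - k - 1).+1 by lia.
by rewrite /= add0n Pk addn0.
Qed.

Section GenDist.
Variable T : finType.
Variable e : rel T.
Variable F : T -> T -> nat.
Hypothesis Fedge : forall u w, e u w -> F u w = 1.
Hypothesis Ftri : forall u v w, F u v <= F u w + F w v.
Hypothesis Fstep : forall u v, u != v -> exists w, e u w /\ (F w v).+1 = F u v.
Hypothesis Frefl : forall u, F u u = 0.
Hypothesis Fbound : forall u v, F u v < #|T|.

Lemma walk_lb u p : F u (last u p) <= size p -> True.
Proof. by []. Qed.

Lemma walk_lb' u p : path e u p -> F u (last u p) <= size p.
Proof.
elim: p u => [|w p IH] u /=; first by rewrite Frefl.
case/andP => euw pw.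
have := Ftri u (last w p) w; rewrite (Fedge euw); have := IH _ pw; lia.
Qed.

Lemma walk_ex k : forall u v, F u v = k ->
  exists p : k.-tuple T, path e u p && (last u p == v).
Proof.
elim: k => [|k IH] u v Fuv.
  exists [tuple]; rewrite /=.
  case: (eqVneq u v) => // nuv.
  by have [w [_ h]] := Fstep nuv; lia.
have nuv : u != v by apply/eqP => h; move: Fuv; rewrite h Frefl.
have [w [euw Fw]] := Fstep nuv.
have [p /andP[pp lp]] := IH w v (ltac:(lia)).
by exists [tuple of w :: p]; rewrite /= euw pp.
Qed.

Lemma dist_F u v : dist e u v = F u v.
Proof.
rewrite /dist; apply: find_iota => //.
  have [p hp] := walk_ex (erefl (F u v)); apply/existsP; by exists p.
move=> j jlt; apply/negP => /existsP[p /andP[pp /eqP lp]].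
have := walk_lb' pp; rewrite lp size_tuple; lia.
Qed.

Lemma connect_F u v : connect e u v.
Proof.
have [p /andP[pp /eqP lp]] := walk_ex (erefl (F u v)).
by apply/connectP; exists p.
Qed.

End GenDist.

Section Spider.
Variable a : nat.

Definition leg (q : nat) : nat := if q <= a then q else a.+1 + (q - a.+1) %/ 2.
Definition dep (q : nat) : nat :=
  if q == 0 then 0 else if q <= a then 1 else 1 + (q - a.+1) %% 2.

Lemma vcase q :
  [\/ [/\ q = 0, leg q = 0 & dep q = 0],
      [/\ 0 < q <= a, leg q = q & dep q = 1],
      exists i, [/\ q = a.+1 + 2 * i, leg q = a.+1 + i & dep q = 1] |
      exists i, [/\ q = a.+2 + 2 * i, leg q = a.+1 + i & dep q = 2]].
Proof.
rewrite /leg /dep; case: (posnP q) => [->|q0]; first by constructor 1.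
case: (q =P 0) => [q00|_]; first lia.
case: leqP => qa; first by constructor 2.
have [i [hi|hi]] : exists i, q = a.+1 + 2 * i \/ q = a.+2 + 2 * i.
  exists ((q - a.+1) %/ 2); lia.
- constructor 3; exists i; split => //; lia.
- constructor 4; exists i; split => //; lia.
Qed.

Definition fd (u v : nat) : nat :=
  if leg u == leg v then (dep u - dep v) + (dep v - dep u) else dep u + dep v.

Ltac vc q := case: (vcase q) => [[? ? ?]|[? ? ?]|[? [? ? ?]]|[? [? ? ?]]].
Ltac fdc u v := rewrite /fd; case: (leg u =P leg v) => ?.
Ltac sfd := rewrite /fd; repeat (case: ifP => /eqP ?); lia.

Lemma fd_sym u v : fd u v = fd v u.
Proof. rewrite /fd eq_sym; case: eqP => _; lia. Qed.

Lemma fd_tri u v w : fd u v <= fd u w + fd w v.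
Proof. rewrite /fd; do 3 case: eqP; lia. Qed.

Lemma fd_eq0 u v : (fd u v == 0) = (u == v).
Proof.
apply/eqP/eqP => [|->]; last by rewrite /fd eqxx; lia.
fdc u v; vc u; vc v; lia.
Qed.


Definition NN m := (a + 2 * m).+1.
Definition G m : rel 'I_(NN m) := fun u v => fd u v == 1.

Lemma vert_ex m k : k < NN m -> exists w : 'I_(NN m), nat_of_ord w = k.
Proof. by move=> kn; exists (Ordinal kn). Qed.

Lemma G_step m (u v : 'I_(NN m)) : u != v ->
  exists w, G u w /\ (fd w v).+1 = fd u v.
Proof.
move=> /eqP nuv; have nuv' : nat_of_ord u <> nat_of_ord v by move/ord_inj.
have ul := ltn_ord u; have vl := ltn_ord v; rewrite /G.
case: (leg u =P leg v) => Hl.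
  exists v; split; vc u; vc v; sfd.
case: (dep u =P 0) => Hd.
  vc v.
  - by exfalso; vc u; lia.
  - exists v; split; vc u; sfd.
  - exists v; split; vc u; sfd.
  - have [w hw] := vert_ex (m := m) (k := nat_of_ord v - 1) (ltac:(lia)).
    exists w; rewrite hw; split; vc u; vc (nat_of_ord v - 1); sfd.
vc u.
- lia.
- have [w hw] := vert_ex (m := m) (k := 0) (ltac:(lia)).
  exists w; rewrite hw; split; vc v; vc 0; sfd.
- have [w hw] := vert_ex (m := m) (k := 0) (ltac:(lia)).
  exists w; rewrite hw; split; vc v; vc 0; sfd.
- have [w hw] := vert_ex (m := m) (k := nat_of_ord u - 1) (ltac:(lia)).
  exists w; rewrite hw; split; vc v; vc (nat_of_ord u - 1); sfd.
Qed.

Lemma G_bound m (u v : 'I_(NN m)) : fd u v < #|'I_(NN m)|.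
Proof.
rewrite card_ord; have ul := ltn_ord u; have vl := ltn_ord v.
have hN : NN m = (a + 2 * m).+1 by [].
vc u; vc v; sfd.
Qed.

Lemma G_dist m (u v : 'I_(NN m)) : dist (@G m) u v = fd u v.
Proof.
apply: (dist_F (F := fun u v : 'I_(NN m) => fd u v)).
- by move=> x y /eqP.
- by move=> x y z; apply: fd_tri.
- exact: G_step.
- by move=> x; apply/eqP; rewrite fd_eq0.
- exact: G_bound.
Qed.

End Spider.

End C.
Import C.

Module D.

Lemma max_in (T : eqType) (s : seq T) (F : T -> nat) : s != [::] ->
  exists2 w, w \in s & forall z, z \in s -> F z <= F w.
Proof.
elim: s => [//|x s IH] _.
case: (eqVneq s [::]) => [->|/IH [w ws Hw]].
  by exists x => [|z]; rewrite ?inE // => /eqP ->.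
case: (leqP (F x) (F w)) => h.
  exists w => [|z]; first by rewrite inE ws orbT.
  by rewrite inE => /orP[/eqP ->|/Hw].
exists x => [|z]; first by rewrite inE eqxx.
rewrite inE => /orP[/eqP ->//|/Hw h2]; exact: leq_trans h2 (ltnW h).
Qed.

Lemma acyclic_gen (T : finType) (e : rel T) (D : T -> nat) :
  symmetric e ->
  (forall w u1 u2, e w u1 -> e w u2 -> D u1 <= D w -> D u2 <= D w -> u1 = u2) ->
  acyclic e.
Proof.
move=> esym low s us ss; apply/negP => cs.
have sn : s != [::] by case: s ss {us cs}.
have [w ws Hw] := max_in D sn.
case: (rot_to ws) => i s' hrot.
have cs' : cycle e (w :: s') by rewrite -hrot rot_cycle.
have us' : uniq (w :: s') by rewrite -hrot rot_uniq.
have ss' : 3 <= size (w :: s') by rewrite -hrot size_rot.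
have ins z : z \in s' -> z \in s.
  by move=> zs; rewrite -(mem_rot i) hrot inE zs orbT.
case: s' hrot cs' us' ss' ins => [|u1 [|z t]] //= hrot cs' us' ss' ins.
move: cs'; rewrite rcons_path /= => /and4P[ewu1 _ _ elw].
rewrite esym in elw.
have lin : last z t \in z :: t by apply: mem_last.
have l2 : last z t \in [:: u1, z & t] by rewrite inE lin orbT.
have equ := low w u1 (last z t) ewu1 elw (Hw _ (ins _ (mem_head _ _)))
  (Hw _ (ins _ l2)).
move: us'; rewrite equ.
by case/and4P => _ /negP; rewrite lin.
Qed.

End D.
Import D.

Module E.

Section S2.
Variable a : nat.
Hypothesis a_gt0 : 0 < a.
Ltac vc q := case: (vcase a q) => [[? ? ?]|[? ? ?]|[? [? ? ?]]|[? [? ? ?]]].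
Ltac sfd := rewrite /fd; repeat (case: ifP => /eqP ?); lia.
Notation NN := (NN a).
Notation fd := (fd a).
Notation dep := (dep a).

Lemma G_low m (w u1 u2 : 'I_(NN m)) : G w u1 -> G w u2 ->
  dep u1 <= dep w -> dep u2 <= dep w -> u1 = u2.
Proof.
rewrite /G => /eqP h1 /eqP h2 d1 d2; apply: ord_inj.
move: h1 h2; vc w; vc u1; vc u2; sfd.
Qed.

Lemma G_hyps m :
  [/\ forall u w : 'I_(NN m), G u w -> fd u w = 1,
      forall u v w : 'I_(NN m), fd u v <= fd u w + fd w v,
      forall u v : 'I_(NN m), u != v -> exists w, G u w /\ (fd w v).+1 = fd u v,
      forall u : 'I_(NN m), fd u u = 0 &
      forall u v : 'I_(NN m), fd u v < #|'I_(NN m)| ].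
Proof.
split.
- by move=> u v; rewrite /G => /eqP.
- by move=> u v w; apply: fd_tri.
- exact: G_step.
- by move=> u; apply/eqP; rewrite fd_eq0.
- exact: G_bound.
Qed.

Lemma Gdist m (u v : 'I_(NN m)) : dist (@G a m) u v = fd u v.
Proof. by case: (G_hyps m) => h1 h2 h3 h4 h5; apply: (dist_F h1 h2 h3 h4 h5). Qed.

Lemma G_tree m : is_tree (@G a m).
Proof.
split.
- rewrite /simple_graph; split; first by move=> x y; rewrite /G fd_sym.
  by move=> x; rewrite /G; have /eqP -> : fd x x == 0 by rewrite fd_eq0.
- rewrite /connected_graph; split; first by rewrite card_ord.
  by case: (G_hyps m) => h1 h2 h3 h4 h5 x y; apply: (connect_F h3 h4).
- apply: (acyclic_gen (D := fun u : 'I_(NN m) => dep u)).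
  + by move=> x y; rewrite /G fd_sym.
  + exact: G_low.
Qed.
End S2.

End E.
Import E.

Module F.

Section S3.
Variable a m : nat.
Hypothesis am : 1 < a + m.
Hypothesis a_gt0 : 0 < a.
Ltac vc q := case: (vcase a q) => [[? ? ?]|[? ? ?]|[? [? ? ?]]|[? [? ? ?]]].
Ltac sfd := rewrite /fd; repeat (case: ifP => /eqP ?); lia.
Notation T := ('I_(NN a m)).
Notation fd := (fd a).
Notation dep := (dep a).

Definition leaf (q : nat) := (0 < q <= a).

Lemma small_facts : leg a 0 = 0 /\ dep 0 = 0 /\ leg a 1 = 1 /\ dep 1 = 1 /\ leg a 2 = 2 /\ dep 2 = 1.
Proof.
rewrite /leg /C.dep /=.
by case: a a_gt0 => [//|[|b]] _ //=.
Qed.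

Lemma leafE q : 0 < q <= a -> leg a q = q /\ dep q = 1.
Proof.
move=> /andP[h1 h2]; rewrite /leg /C.dep h2; split => //.
by case: eqP h1 => // ->.
Qed.

Lemma nbhdE (u w : T) : (w \in nbhd (@G a m) u) = (fd u w == 1).
Proof. by rewrite inE. Qed.

Lemma twins_eq (u v : T) : twins (@G a m) u v ->
  forall w : T, ((nat_of_ord w != nat_of_ord v) && (fd u w == 1)) =
                ((nat_of_ord w != nat_of_ord u) && (fd v w == 1)).
Proof.
move=> /eqP /setP H w; have := H w; rewrite !inE.
by rewrite !(inj_eq (@ord_inj _)).
Qed.

Time Lemma nonleaf_twin (u v : T) : twins (@G a m) u v -> u != v -> leaf u.
Proof.
move=> tw /eqP nuv; have nuv' : nat_of_ord u <> nat_of_ord v by move/ord_inj.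
have H := twins_eq tw; rewrite /leaf.
have ul := ltn_ord u; have vl := ltn_ord v.
have hN : NN a m = (a + 2 * m).+1 by [].
have [L0 [D0 [L1 [D1 [L2 D2]]]]] := small_facts.
have [w1 hw1] := vert_ex (a := a) (m := m) (k := 1) (ltac:(lia)).
have [w2 hw2] := vert_ex (a := a) (m := m) (k := 2) (ltac:(lia)).
have [w0 hw0] := vert_ex (a := a) (m := m) (k := 0) (ltac:(lia)).
vc u.
-
  case: (nat_of_ord v =P 1) => hv.
  + move: (H w2); rewrite hw2; vc v; sfd.
  + move: (H w1); rewrite hw1; vc v; sfd.
- lia.
-
  have [wy hwy] := vert_ex (a := a) (m := m) (k := (nat_of_ord u).+1) (ltac:(lia)).
  case: (nat_of_ord v =P (nat_of_ord u).+1) => hv.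
  + move: (H w0); rewrite hw0; vc v; sfd.
  + move: (H wy); rewrite hwy; vc (nat_of_ord u).+1; vc v; sfd.
-
  have [wp hwp] := vert_ex (a := a) (m := m) (k := (nat_of_ord u).-1) (ltac:(lia)).
  case: (nat_of_ord v =P (nat_of_ord u).-1) => hv.
  + move: (H w0); rewrite hw0; vc v; sfd.
  case: (nat_of_ord v =P 0) => hv0.
  + move: (H w1); rewrite hw1; vc v; sfd.
  + move: (H wp); rewrite hwp; vc (nat_of_ord u).-1; vc v; sfd.
Qed.

Time Lemma twins_char (u v : T) : twins (@G a m) u v = (u == v) || (leaf u && leaf v).
Proof.
case: (eqVneq u v) => [->|nuv] /=; first by rewrite /twins eqxx.
apply/idP/idP.
- move=> tw; rewrite (nonleaf_twin tw nuv).
  have tw' : twins (@G a m) v u by rewrite /twins eq_sym.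
  by rewrite (nonleaf_twin tw' (negbT _)) // eq_sym (negbTE nuv).
- rewrite /leaf => /andP[lu lv]; apply/eqP/setP => w; rewrite !inE.
  rewrite -[w == v](inj_eq (@ord_inj _)) -[w == u](inj_eq (@ord_inj _)) /G.
  have /eqP nuv' : nat_of_ord u != nat_of_ord v by rewrite (inj_eq (@ord_inj _)).
  have [Lu Du] := leafE lu; have [Lv Dv] := leafE lv.
  vc w; sfd.
Qed.

Lemma card_leaves : #|[set v : T | leaf v]| = a.
Proof.
have hN : NN a m = (a + 2 * m).+1 by [].
have -> : [set v : T | leaf v] = [set inord i.+1 | i : 'I_a].
  apply/setP => v; rewrite inE /leaf; apply/idP/imsetP.
  - move=> /andP[h1 h2].
    have hi : (nat_of_ord v).-1 < a by lia.
    exists (Ordinal hi) => //; apply: ord_inj; rewrite inordK /=; lia.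
  - move=> [i _ ->]; rewrite inordK; have := ltn_ord i; lia.
rewrite card_imset ?card_ord //.
move=> i j /(congr1 (@nat_of_ord _)); rewrite !inordK; try (have := ltn_ord i; have := ltn_ord j; lia).
by move=> [h]; apply: ord_inj.
Qed.

Time Lemma G_twin : twin_number (@G a m) = a.
Proof.
have hN : NN a m = (a + 2 * m).+1 by [].
apply/eqP; rewrite eqn_leq; apply/andP; split.
- apply/bigmax_leqP => u _.
  case: (boolP (leaf u)) => lu.
  + have -> : [set v | twins (@G a m) u v] = [set v : T | leaf v].
      by apply/setP => v; rewrite !inE twins_char lu /=; case: eqP => // <-; rewrite lu.
    by rewrite card_leaves.
  + have -> : [set v | twins (@G a m) u v] = [set u].
      by apply/setP => v; rewrite !inE twins_char (negbTE lu) orbF eq_sym.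
    by rewrite cards1.
- have [w1 hw1] := vert_ex (a := a) (m := m) (k := 1) (ltac:(lia)).
  apply: leq_trans (leq_bigmax w1).
  have -> : [set v | twins (@G a m) w1 v] = [set v : T | leaf v].
    have lw : leaf w1 by rewrite /leaf hw1; lia.
    by apply/setP => v; rewrite !inE twins_char lw /=; case: eqP => // <-; rewrite lw.
  by rewrite card_leaves.
Qed.
End S3.

End F.
Import F.

Module H.

Section Ismin.
Variable T : finType.
Definition ismin (S : {set T}) (g : T -> nat) k :=
  (exists2 w, w \in S & k = g w) /\ (forall w, w \in S -> k <= g w).

Lemma bigmin_lb_seq (r : seq T) (P : pred T) g D w :
  w \in r -> P w -> \big[minn/D]_(i <- r | P i) g i <= g w.
Proof.
elim: r => [//|x r IH]; rewrite inE big_cons => /orP[/eqP <- -> | wr Pw].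
  exact: geq_minl.
case: (P x); last exact: IH.
exact: leq_trans (geq_minr _ _) (IH wr Pw).
Qed.

Lemma bigmin_ismin (S : {set T}) g D : S != set0 ->
  (forall w, w \in S -> g w <= D) -> ismin S g (\big[minn/D]_(w in S) g w).
Proof.
move=> /set0Pn [x xS] hD.
have lb : forall w, w \in S -> \big[minn/D]_(w in S) g w <= g w.
  by move=> w wS; apply: bigmin_lb_seq => //; rewrite mem_index_enum.
split => //.
have : (\big[minn/D]_(w in S) g w = D) \/
       (exists2 w, w \in S & \big[minn/D]_(w in S) g w = g w).
  apply: (big_ind (fun y => y = D \/ exists2 w, w \in S & y = g w)).
  - by left.
  - move=> y z hy hz /=; case: (leqP y z) => h.
      exact: hy.
    exact: hz.
  - by move=> w wS; right; exists w.
case=> [hb|//]; exists x => //.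
by apply/eqP; rewrite eqn_leq lb //= hb hD.
Qed.

Lemma ismin_uniq (S : {set T}) (g : T -> nat) k1 k2 : ismin S g k1 -> ismin S g k2 -> k1 = k2.
Proof.
move=> [[w1 w1S ->] h1] [[w2 w2S ->] h2].
by apply/eqP; rewrite eqn_leq h1 // h2.
Qed.

Lemma ismin_lt (S : {set T}) (g h : T -> nat) k1 k2 : ismin S g k1 -> ismin S h k2 ->
  (forall w, w \in S -> g w < h w) -> k1 < k2.
Proof.
move=> [_ h1] [[w2 w2S ->] _] hgh.
exact: leq_ltn_trans (h1 _ w2S) (hgh _ w2S).
Qed.

Lemma ismin_ext (S : {set T}) (g h : T -> nat) k : (forall w, w \in S -> g w = h w) -> ismin S g k -> ismin S h k.
Proof.
move=> E [[w wS ->] hl]; split; first by exists w => //; rewrite E.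
by move=> z zS; rewrite -E //; apply: hl.
Qed.

Lemma ismin0 (S : {set T}) (g : T -> nat) k : ismin S g k -> (k == 0) = [exists w in S, g w == 0].
Proof.
move=> [[w wS ->] hl]; apply/eqP/existsP => [h|[z /andP[zS /eqP gz]]].
  by exists w; rewrite wS h.
by have := hl z zS; rewrite gz leqn0 => /eqP.
Qed.

End Ismin.

Lemma ismin_imset (T T' : finType) (f : T -> T') (S : {set T}) g k :
  ismin (f @: S) g k -> ismin S (fun w => g (f w)) k.
Proof.
move=> [[w' /imsetP[w wS ->] ->] hl]; split; first by exists w.
by move=> z zS; apply: hl; apply: imset_f.
Qed.


Lemma label_partition (T : finType) k (lab : T -> 'I_k) :
  (forall i, exists v, lab v = i) ->
  partition [set [set v | lab v == i] | i : 'I_k] [set: T] /\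
  #|[set [set v | lab v == i] | i : 'I_k]| = k.
Proof.
move=> surj.
have h1 : {in predT &, forall i j : 'I_k, j != i ->
    [disjoint [set v | lab v == i] & [set v | lab v == j]]}.
  move=> i j _ _ nij; apply/pred0P => v /=; rewrite !inE.
  by apply/andP => -[/eqP -> /eqP ji]; move/eqP: nij; rewrite ji.
have h2 : forall i : 'I_k, predT i -> [set v | lab v == i] != set0.
  move=> i _; case: (surj i) => v hv; apply/set0Pn; exists v; by rewrite inE hv.
have [hp hinj] := @indexed_partition _ T predT (fun i => [set v | lab v == i]) h1 h2.
split.
  have -> : [set: T] = cover [set [set v | lab v == i] | i : 'I_k].
    apply/setP => v; rewrite inE; apply/esym/bigcupP.
    by exists [set w | lab w == lab v]; [apply: imset_f | rewrite inE].
  exact: hp.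
by rewrite card_in_imset ?card_ord // => i j _ _ /hinj; apply.
Qed.

End H.
Import H.

Module J.

Section S4.
Variable a m : nat.
Ltac vc q := case: (vcase a q) => [[? ? ?]|[? ? ?]|[? [? ? ?]]|[? [? ? ?]]].
Notation T := ('I_(NN a m)).
Notation fd := (fd a).
Notation dep := (dep a).
Notation leg := (leg a).

Lemma ds_ismin (u : T) (S : {set T}) : S != set0 ->
  ismin S (fun w => fd u w) (dist_set (@G a m) u S).
Proof.
move=> S0; rewrite /dist_set.
under eq_bigr do rewrite Gdist.
apply: bigmin_ismin => // w _; apply: ltnW; exact: G_bound.
Qed.

Local Notation X i := (a.+1 + 2 * i).
Local Notation Y i := (a.+2 + 2 * i).
Lemma legX i : leg (X i) = a.+1 + i.
Proof. rewrite /C.leg ifN; lia. Qed.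
Lemma legY i : leg (Y i) = a.+1 + i.
Proof. rewrite /C.leg ifN; lia. Qed.
Lemma depX i : dep (X i) = 1.
Proof. rewrite /C.dep !ifN; lia. Qed.
Lemma depY i : dep (Y i) = 2.
Proof. rewrite /C.dep !ifN; lia. Qed.

Definition xo k : T := inord (X k).
Definition yo k : T := inord (Y k).

Lemma val_xo k : k < m -> nat_of_ord (xo k) = X k.
Proof. by move=> km; rewrite /xo inordK //; lia. Qed.
Lemma val_yo k : k < m -> nat_of_ord (yo k) = Y k.
Proof. by move=> km; rewrite /yo inordK //; lia. Qed.

Lemma samepb (P : {set {set T}}) x y S : partition P [set: T] ->
  pblock P x = pblock P y -> S \in P -> (x \in S) = (y \in S).
Proof.
move=> pP exy SP.
have tP := partition_trivIset pP.
have cP : forall z, z \in cover P by move=> z; rewrite (cover_partition pP) inE.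
apply/idP/idP => h.
- by rewrite -(def_pblock tP SP h) exy mem_pblock.
- by rewrite -(def_pblock tP SP h) -exy mem_pblock.
Qed.

Section Swap.
Variables i j : nat.
Hypothesis nij : i != j.
Hypothesis im : i < m.
Hypothesis jm : j < m.

Definition sw q := if q == X i then X j else if q == X j then X i else
                   if q == Y i then Y j else if q == Y j then Y i else q.
Definition tau l := if l == a.+1 + i then a.+1 + j else if l == a.+1 + j then a.+1 + i else l.

Lemma tau_eq l1 l2 : (tau l1 == tau l2) = (l1 == l2).
Proof. rewrite /tau; move/eqP: nij => nij'; repeat (case: ifP => /eqP ?); lia. Qed.

Lemma sw_spec q :
  (q = X i /\ sw q = X j) \/ (q = X j /\ sw q = X i) \/ (q = Y i /\ sw q = Y j) \/
      (q = Y j /\ sw q = Y i) \/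
      [/\ q <> X i, q <> X j, q <> Y i, q <> Y j & sw q = q].
Proof.
rewrite /sw; case: ifP => [/eqP|/eqP h1]; first by left.
case: ifP => [/eqP|/eqP h2]; first by right; left.
case: ifP => [/eqP|/eqP h3]; first by right; right; left.
case: ifP => [/eqP|/eqP h4]; first by right; right; right; left.
by right; right; right; right.
Qed.

Lemma sw_inv q : sw (sw q) = q.
Proof.
move/eqP: nij => nij'.
have := sw_spec q; have := sw_spec (sw q);
case=> [[h1 h2]|[[h1 h2]|[[h1 h2]|[[h1 h2]|[h1 h2 h3 h4 h5]]]]];
case=> [[g1 g2]|[[g1 g2]|[[g1 g2]|[[g1 g2]|[g1 g2 g3 g4 g5]]]]]; lia.
Qed.

Lemma sw_val q : sw q = (if q == X i then X j else if q == X j then X i else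
                   if q == Y i then Y j else if q == Y j then Y i else q).
Proof. by []. Qed.

Lemma swXi : sw (X i) = X j.
Proof. move/eqP: nij => nij'; case: (sw_spec (X i)) => [[k1 k2]|[[k1 k2]|[[k1 k2]|[[k1 k2]|[k1 k2 k3 k4 k5]]]]]; lia. Qed.
Lemma swXj : sw (X j) = X i.
Proof. move/eqP: nij => nij'; case: (sw_spec (X j)) => [[k1 k2]|[[k1 k2]|[[k1 k2]|[[k1 k2]|[k1 k2 k3 k4 k5]]]]]; lia. Qed.
Lemma swYi : sw (Y i) = Y j.
Proof. move/eqP: nij => nij'; case: (sw_spec (Y i)) => [[k1 k2]|[[k1 k2]|[[k1 k2]|[[k1 k2]|[k1 k2 k3 k4 k5]]]]]; lia. Qed.
Lemma swYj : sw (Y j) = Y i.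
Proof. move/eqP: nij => nij'; case: (sw_spec (Y j)) => [[k1 k2]|[[k1 k2]|[[k1 k2]|[[k1 k2]|[k1 k2 k3 k4 k5]]]]]; lia. Qed.
Lemma swO q : q <> X i -> q <> X j -> q <> Y i -> q <> Y j -> sw q = q.
Proof. move=> h1 h2 h3 h4; case: (sw_spec q) => [[k1 k2]|[[k1 k2]|[[k1 k2]|[[k1 k2]|[k1 k2 k3 k4 k5]]]]]; lia. Qed.

Lemma sw_lt q : q < NN a m -> sw q < NN a m.
Proof.
have hN : NN a m = (a + 2 * m).+1 by [].
move=> qn; rewrite /sw; repeat (case: ifP => /eqP ?); lia.
Qed.

Lemma sw_dep q : dep (sw q) = dep q.
Proof.
rewrite /sw; case: ifP => [/eqP ->|_]; first by rewrite !depX.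
case: ifP => [/eqP ->|_]; first by rewrite !depX.
case: ifP => [/eqP ->|_]; first by rewrite !depY.
case: ifP => [/eqP ->|_]; first by rewrite !depY.
by [].
Qed.

Lemma sw_leg q : leg (sw q) = tau (leg q).
Proof.
move/eqP: nij => nij'.
rewrite /sw /tau; case: ifP => [/eqP ->|/eqP h1]; first by rewrite !legX eqxx.
case: ifP => [/eqP ->|/eqP h2]; first by rewrite !legX eqxx; case: eqP => //; lia.
case: ifP => [/eqP ->|/eqP h3]; first by rewrite !legY eqxx.
case: ifP => [/eqP ->|/eqP h4]; first by rewrite !legY eqxx; case: eqP => //; lia.
vc q; repeat (case: ifP => /eqP ?); lia.
Qed.

Lemma fd_sw u w : fd (sw u) (sw w) = fd u w.
Proof. by rewrite /C.fd !sw_dep !sw_leg tau_eq. Qed.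

Definition sig (w : T) : T := inord (sw w).

Lemma val_sig w : nat_of_ord (sig w) = sw w.
Proof. by rewrite /sig inordK // sw_lt. Qed.

Lemma sig_inv w : sig (sig w) = w.
Proof. by apply: ord_inj; rewrite !val_sig sw_inv. Qed.

Lemma fd_sig u w : fd (sig u) (sig w) = fd u w.
Proof. by rewrite !val_sig fd_sw. Qed.

Lemma sig_in (P : {set {set T}}) S : partition P [set: T] ->
  pblock P (xo i) = pblock P (xo j) -> pblock P (yo i) = pblock P (yo j) ->
  S \in P -> forall w, (sig w \in S) = (w \in S).
Proof.
move=> pP ex ey SP w.
case: (nat_of_ord w =P X i) => h1.
  have -> : sig w = xo j by apply: ord_inj; rewrite val_sig val_xo // h1 swXi.
  have -> : w = xo i by apply: ord_inj; rewrite val_xo.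
  by rewrite (samepb pP ex).
case: (nat_of_ord w =P X j) => h2.
  have -> : sig w = xo i.
    by apply: ord_inj; rewrite val_sig val_xo // h2 swXj.
  have -> : w = xo j by apply: ord_inj; rewrite val_xo.
  by rewrite (samepb pP ex).
case: (nat_of_ord w =P Y i) => h3.
  have -> : sig w = yo j.
    by apply: ord_inj; rewrite val_sig val_yo // h3 swYi.
  have -> : w = yo i by apply: ord_inj; rewrite val_yo.
  by rewrite (samepb pP ey).
case: (nat_of_ord w =P Y j) => h4.
  have -> : sig w = yo i.
    by apply: ord_inj; rewrite val_sig val_yo // h4 swYj.
  have -> : w = yo j by apply: ord_inj; rewrite val_yo.
  by rewrite (samepb pP ey).
have -> : sig w = w.
  by apply: ord_inj; rewrite val_sig swO.
by [].
Qed.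

Lemma ds_sig (P : {set {set T}}) S u : partition P [set: T] ->
  pblock P (xo i) = pblock P (xo j) -> pblock P (yo i) = pblock P (yo j) ->
  S \in P -> dist_set (@G a m) (sig u) S = dist_set (@G a m) u S.
Proof.
move=> pP ex ey SP.
have S0 : S != set0 := partition_neq0 pP SP.
have h2 := ds_ismin (sig u) S0.
have hin := sig_in pP ex ey SP.
case: (ds_ismin u S0) => [[w wS E] hl].
apply: (ismin_uniq h2); split.
  by exists (sig w); [rewrite hin | rewrite fd_sig].
move=> z zS; rewrite -(sig_inv z) fd_sig; apply: hl; by rewrite hin.
Qed.

End Swap.

Lemma lower_bound P : locating_partition (@G a m) P -> m <= #|P| * #|P|.
Proof.
move=> [pP loc].
pose F (k : 'I_m) := (pblock P (xo k), pblock P (yo k)).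
have Finj : injective F.
  move=> i j [ex ey]; apply/eqP/negP => /negP nij.
  have nij' : nat_of_ord i != nat_of_ord j by [].
  have hx : xo i != xo j.
    by apply/negP => /eqP /(congr1 (@nat_of_ord _)); rewrite !val_xo //; move/eqP: nij'; lia.
  have [S SP hS] := loc _ _ hx.
  have im := ltn_ord i; have jm := ltn_ord j.
  have e : xo j = sig i j (xo i).
    by apply: ord_inj; rewrite (val_sig nij' im jm) !val_xo // (swXi nij' im jm).
  by move/negP: hS; apply; rewrite e (ds_sig nij' im jm _ pP ex ey SP).
have cP : forall z : T, z \in cover P by move=> z; rewrite (cover_partition pP) inE.
have sub : [set F k | k : 'I_m] \subset setX P P.
  apply/subsetP => _ /imsetP[k _ ->]; rewrite inE /=.
  by rewrite !pblock_mem.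
rewrite -cardsX; have := subset_leq_card sub.
by rewrite card_imset // card_ord.
Qed.

End S4.

End J.
Import J.

Module K.

Section S5.
Variable a m : nat.
Ltac vc q := case: (vcase a q) => [[? ? ?]|[? ? ?]|[? [? ? ?]]|[? [? ? ?]]].
Notation T := ('I_(NN a m)).
Notation T' := ('I_(NN a m.+1)).
Notation fd := (fd a).
Notation dep := (dep a).
Notation leg := (leg a).

Lemma NNE k : NN a k = (a + 2 * k).+1. Proof. by []. Qed.
Ltac nlia := have := NNE m; have := NNE m.+1; lia.

Definition emb (u : T) : T' := inord (nat_of_ord u).
Lemma val_emb u : nat_of_ord (emb u) = nat_of_ord u.
Proof. rewrite /emb inordK //; have := ltn_ord u; nlia. Qed.
Lemma emb_inj : injective emb.
Proof. by move=> u v /(congr1 (@nat_of_ord _)); rewrite !val_emb => /ord_inj. Qed.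

Definition xn : T' := inord (a.+1 + 2 * m).
Definition yn : T' := inord (a.+2 + 2 * m).
Lemma val_xn : nat_of_ord xn = a.+1 + 2 * m.
Proof. rewrite /xn inordK //; lia. Qed.
Lemma val_yn : nat_of_ord yn = a.+2 + 2 * m.
Proof. rewrite /yn inordK //; lia. Qed.

Lemma split' (v : T') : (exists u, v = emb u) \/ v = xn \/ v = yn.
Proof.
have vl := ltn_ord v.
case: (ltnP (nat_of_ord v) (NN a m)) => h.
  left; exists (Ordinal h); apply: ord_inj; by rewrite val_emb.
right; case: (nat_of_ord v =P a.+1 + 2 * m) => h2.
  by left; apply: ord_inj; rewrite val_xn.
by right; apply: ord_inj; rewrite val_yn; nlia.
Qed.

Lemma emb_nxn u : emb u != xn.
Proof.
apply/negP => /eqP /(congr1 (@nat_of_ord _)); rewrite val_emb val_xn.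
have := ltn_ord u; nlia.
Qed.
Lemma emb_nyn u : emb u != yn.
Proof.
apply/negP => /eqP /(congr1 (@nat_of_ord _)); rewrite val_emb val_yn.
have := ltn_ord u; nlia.
Qed.
Lemma xn_nyn : xn != yn.
Proof. by apply/negP => /eqP /(congr1 (@nat_of_ord _)); rewrite val_xn val_yn; lia. Qed.

Lemma ds_emb u (S : {set T}) : S != set0 ->
  dist_set (@G a m.+1) (emb u) (emb @: S) = dist_set (@G a m) u S.
Proof.
move=> S0.
have S0' : emb @: S != set0.
  by case/set0Pn: S0 => w wS; apply/set0Pn; exists (emb w); apply: imset_f.
have h1 := ismin_imset (ds_ismin (emb u) S0').
have h2 : ismin S (fun w => fd u w) (dist_set (@G a m.+1) (emb u) (emb @: S)).
  by apply: (ismin_ext _ h1) => w _ /=; rewrite !val_emb.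
exact: ismin_uniq h2 (ds_ismin u S0).
Qed.

Lemma ds0 (z : T') (S : {set T'}) : S != set0 ->
  (dist_set (@G a m.+1) z S == 0) = (z \in S).
Proof.
move=> S0; rewrite (ismin0 (ds_ismin z S0)).
apply/existsP/idP => [[w /andP[wS]]|zS]; last by exists z; rewrite zS /= fd_eq0.
by rewrite fd_eq0 (inj_eq (@ord_inj _)) => /eqP ->.
Qed.

Lemma fd_xy (q : nat) : q < NN a m -> fd (a.+1 + 2 * m) q < fd (a.+2 + 2 * m) q.
Proof.
move=> ql; rewrite /C.fd legX legY depX depY.
have := NNE m; vc q; repeat (case: ifP => /eqP ?); lia.
Qed.

Definition Pstep (P : {set {set T}}) : {set {set T'}} :=
  [set xn; yn] |: [set emb @: (S : {set T}) | S in P].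

Lemma step_ok P : locating_partition (@G a m) P ->
  locating_partition (@G a m.+1) (Pstep P) /\ #|Pstep P| = #|P|.+1.
Proof.
move=> [pP loc].
set B : {set T'} := [set xn; yn].
set Pi := [set emb @: (S : {set T}) | S in P].
have B0 : B != set0 by apply/set0Pn; exists xn; rewrite !inE eqxx.
have BnPi : B \notin Pi.
  apply/negP => /imsetP[S _ hS].
  have : xn \in emb @: S by rewrite -hS !inE eqxx.
  by case/imsetP => u _ /eqP; rewrite eq_sym (negbTE (emb_nxn u)).
split; last first.
  by rewrite /Pstep cardsU1 BnPi card_imset //; apply: imset_inj; apply: emb_inj.
split.
  have pI : partition Pi (emb @: [set: T]) by rewrite imset_partition //; exact: emb_inj.
  have dB : [disjoint B & emb @: [set: T]].
    apply/pred0P => v /=; rewrite !inE; apply/negP => /andP[/orP[] /eqP -> /imsetP[u _ /eqP]].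
      by rewrite eq_sym (negbTE (emb_nxn u)).
    by rewrite eq_sym (negbTE (emb_nyn u)).
  have := partitionU1 pI B0 dB.
  have -> : B :|: emb @: [set: T] = [set: T'].
    apply/setP => v; rewrite !inE; case: (split' v) => [[u ->]|[->|->]].
    - by rewrite imset_f ?orbT.
    - by rewrite eqxx.
    - by rewrite eqxx orbT.
  by [].
have cP : forall z : T, z \in cover P by move=> z; rewrite (cover_partition pP) inE.
have inB : forall S, S \in Pi -> S \in Pstep P by move=> S SP; rewrite /Pstep inE SP orbT.
have BP : B \in Pstep P by rewrite /Pstep setU11.
have oldnew : forall u v, v \in B -> exists2 S, S \in Pstep P &
    dist_set (@G a m.+1) (emb u) S != dist_set (@G a m.+1) v S.
  move=> u v vB; exists B => //.
  have : dist_set (@G a m.+1) v B == 0 by rewrite ds0.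
  have : dist_set (@G a m.+1) (emb u) B != 0.
    by rewrite ds0 // !inE negb_or emb_nxn emb_nyn.
  by move=> h1 /eqP ->.
have newnew : forall u v, u \in B -> v \in B -> u != v -> exists2 S, S \in Pstep P &
    dist_set (@G a m.+1) u S != dist_set (@G a m.+1) v S.
  have u0 : T := ord0.
  have S0P : pblock P u0 \in P by apply: pblock_mem.
  have S00 : pblock P u0 != set0 := partition_neq0 pP S0P.
  have S00' : emb @: pblock P u0 != set0.
    by case/set0Pn: S00 => w wS; apply/set0Pn; exists (emb w); apply: imset_f.
  have lt : dist_set (@G a m.+1) xn (emb @: pblock P u0) <
            dist_set (@G a m.+1) yn (emb @: pblock P u0).
    apply: (ismin_lt (ds_ismin xn S00') (ds_ismin yn S00')).
    move=> _ /imsetP[w _ ->]; rewrite val_xn val_yn val_emb; apply: fd_xy.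
    exact: ltn_ord.
  move=> u v; rewrite !inE => /orP[] /eqP -> /orP[] /eqP -> //=; rewrite ?eqxx //= => _;
    (exists (emb @: pblock P u0); first by apply: inB; apply: imset_f).
    - by rewrite neq_ltn lt.
    - by rewrite neq_ltn lt orbT.
move=> u v nuv.
have [[u0 eu]|hu] := split' u; have [[v0 ev]|hv] := split' v; rewrite ?eu ?ev in nuv *.
- have nuv0 : u0 != v0 by apply: contraNneq nuv => ->.
  have [S SP hS] := loc _ _ nuv0.
  have S0 := partition_neq0 pP SP.
  exists (emb @: S); first by apply: inB; apply: imset_f.
  by rewrite !ds_emb.
- by apply: oldnew; rewrite !inE; case: hv => ->; rewrite eqxx ?orbT.
- have [S SP hS] := oldnew v0 u (ltac:(rewrite !inE; case: hu => ->; rewrite eqxx ?orbT //)).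
  by exists S => //; rewrite eq_sym.
- by apply: newnew => //; rewrite !inE; [case: hu | case: hv] => ->; rewrite eqxx ?orbT.
Qed.
End S5.

End K.
Import K.

Module M.

Lemma dsz a m (z : 'I_(NN a m)) (S : {set 'I_(NN a m)}) : S != set0 ->
  (dist_set (@G a m) z S == 0) = (z \in S).
Proof.
move=> S0; rewrite (ismin0 (ds_ismin z S0)).
apply/existsP/idP => [[w /andP[wS]]|zS]; last by exists z; rewrite zS /= fd_eq0.
by rewrite fd_eq0 (inj_eq (@ord_inj _)) => /eqP ->.
Qed.

Lemma ds_single a m (z : 'I_(NN a m)) (S : {set 'I_(NN a m)}) q : S != set0 ->
  (forall w, w \in S -> nat_of_ord w = q) -> dist_set (@G a m) z S = fd a z q.
Proof.
move=> S0 hq; case: (ds_ismin z S0) => [[w wS ->] _].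
by rewrite (hq _ wS).
Qed.

Lemma lab_loc (T : finType) (e : rel T) k (lab : T -> 'I_k) :
  (forall i, exists v, lab v = i) ->
  (forall u v, u != v -> exists i,
     dist_set e u [set w | lab w == i] != dist_set e v [set w | lab w == i]) ->
  exists P, locating_partition e P /\ #|P| = k.
Proof.
move=> surj hl; have [pP cP] := label_partition surj.
exists [set [set v | lab v == i] | i : 'I_k]; split => //; split => //.
move=> u v nuv; have [i hi] := hl u v nuv.
by exists [set w | lab w == i] => //; apply: imset_f.
Qed.

Lemma base2 c : exists P, locating_partition (@G c.+2 0) P /\ #|P| = c.+2.
Proof.
pose a := c.+2.
have hN : NN a 0 = a.+1 by rewrite /NN; lia.
pose lab (v : 'I_(NN a 0)) : 'I_a := inord (nat_of_ord v).-1.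
apply: (lab_loc (lab := lab)).
  move=> i; exists (inord i.+1); apply: ord_inj; rewrite /lab !inordK //=.
  - by have := ltn_ord i; lia.
  - by have := ltn_ord i; lia.
have labv : forall v, nat_of_ord (lab v) = (nat_of_ord v).-1.
  by move=> v; rewrite /lab inordK //; have := ltn_ord v; lia.
move=> u v nuv.
case: (eqVneq (lab u) (lab v)) => hl.
  have nuv' : nat_of_ord u <> nat_of_ord v by move/ord_inj => h; rewrite h eqxx in nuv.
  have : (nat_of_ord u).-1 = (nat_of_ord v).-1 by rewrite -!labv hl.
  move=> e1.
  have i1 : 1 < a by [].
  exists (inord 1).
  have [w2 hw2] := vert_ex (a := a) (m := 0) (k := 2) (ltac:(lia)).
  have S0 : [set w | lab w == inord 1] != set0.
    apply/set0Pn; exists w2; rewrite inE; apply/eqP/ord_inj; rewrite labv hw2 inordK //.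
  have hq : forall w, w \in [set w | lab w == inord 1] -> nat_of_ord w = 2.
    move=> w; rewrite inE => /eqP /(congr1 (@nat_of_ord _)); rewrite labv inordK //.
    have := ltn_ord w; lia.
  rewrite !(ds_single _ S0 hq).
  have hu : nat_of_ord u < 2 by have := ltn_ord u; have := ltn_ord v; lia.
  have hv : nat_of_ord v < 2 by have := ltn_ord u; have := ltn_ord v; lia.
  have f0 : fd a 0 2 = 1 by [].
  have f1 : fd a 1 2 = 2 by [].
  have : (nat_of_ord u = 0 /\ nat_of_ord v = 1) \/ (nat_of_ord u = 1 /\ nat_of_ord v = 0) by lia.
  by case=> [[-> ->]|[-> ->]]; rewrite f0 f1.
exists (lab u).
have S0 : [set w | lab w == lab u] != set0 by apply/set0Pn; exists u; rewrite inE.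
apply/negP => /eqP h.
have : dist_set (@G a 0) u [set w | lab w == lab u] == 0 by rewrite dsz // inE.
by rewrite h dsz // inE eq_sym (negbTE hl).
Qed.

Lemma base1 : exists P, locating_partition (@G 1 1) P /\ #|P| = 2.
Proof.
have hN : NN 1 1 = 4 by [].
pose lab (v : 'I_(NN 1 1)) : 'I_2 := inord (nat_of_ord v != 1).
have labv : forall v, nat_of_ord (lab v) = (nat_of_ord v != 1).
  by move=> v; rewrite /lab inordK //; case: (_ != _).
apply: (lab_loc (lab := lab)).
  move=> i; have [w1 hw1] := vert_ex (a := 1) (m := 1) (k := 1) (ltac:(lia)).
  have [w0 hw0] := vert_ex (a := 1) (m := 1) (k := 0) (ltac:(lia)).
  case: i => [[|[|//]] hi].
  - by exists w1; apply: ord_inj; rewrite labv hw1.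
  - by exists w0; apply: ord_inj; rewrite labv hw0.
move=> u v nuv.
case: (eqVneq (lab u) (lab v)) => hl.
  have nuv' : nat_of_ord u <> nat_of_ord v by move/ord_inj => h; rewrite h eqxx in nuv.
  have e1 : (nat_of_ord u != 1) = (nat_of_ord v != 1).
    have h := congr1 (@nat_of_ord _) hl; rewrite !labv in h; move: h.
    by case: (nat_of_ord u != 1); case: (nat_of_ord v != 1).
  have [w1 hw1] := vert_ex (a := 1) (m := 1) (k := 1) (ltac:(lia)).
  case: (eqVneq (nat_of_ord u) 1) => hu.
    by exists (lab u) => //; move: e1; rewrite hu eqxx => /esym/negbFE/eqP h; case: nuv'; rewrite hu h.
  exists (inord 0).
  have S0 : [set w | lab w == inord 0] != set0.
    apply/set0Pn; exists w1; rewrite inE; apply/eqP/ord_inj; rewrite labv hw1 inordK //.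
  have hq : forall w, w \in [set w | lab w == inord 0] -> nat_of_ord w = 1.
    move=> w; rewrite inE => /eqP /(congr1 (@nat_of_ord _)); rewrite labv inordK //.
    by case: eqP.
  rewrite !(ds_single _ S0 hq).
  have hv : nat_of_ord v != 1 by rewrite -e1.
  have ul := ltn_ord u; have vl := ltn_ord v.
  have f0 : fd 1 0 1 = 1 by [].
  have f2 : fd 1 2 1 = 2 by [].
  have f3 : fd 1 3 1 = 3 by [].
  move/eqP: hu => hu; move/eqP: hv => hv.
  have : nat_of_ord u = 0 \/ nat_of_ord u = 2 \/ nat_of_ord u = 3 by lia.
  have : nat_of_ord v = 0 \/ nat_of_ord v = 2 \/ nat_of_ord v = 3 by lia.
  by case=> [hv'|[hv'|hv']]; case=> [hu'|[hu'|hu']]; rewrite hu' hv' ?f0 ?f2 ?f3 //; lia.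
exists (lab u).
have S0 : [set w | lab w == lab u] != set0 by apply/set0Pn; exists u; rewrite inE.
apply/negP => /eqP h.
have : dist_set (@G 1 1) u [set w | lab w == lab u] == 0 by rewrite dsz // inE.
by rewrite h dsz // inE eq_sym (negbTE hl).
Qed.

End M.
Import M.

Module N.

Lemma ex_min (R : nat -> Prop) k0 : R k0 -> exists k, R k /\ forall j, R j -> k <= j.
Proof.
move: k0; suff H : forall n k0, k0 <= n -> R k0 -> exists k, R k /\ forall j, R j -> k <= j.
  by move=> k0; apply: (H k0).
elim=> [|n IH] k0 kn Rk.
  exists k0; split => // j _; move: kn; rewrite leqn0 => /eqP ->; exact: leq0n.
case: (classic (exists j, j < k0 /\ R j)) => [[j [jk Rj]]|nex].
  by apply: (IH j) => //; lia.
exists k0; split => // j Rj; case: (leqP k0 j) => // jk.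
by case: nex; exists j.
Qed.

Definition Q a m k := exists P, locating_partition (@G a m) P /\ #|P| = k.

Lemma PD_Q a m k : partition_dimension (@G a m) k <-> (Q a m k /\ forall j, Q a m j -> k <= j).
Proof.
split.
  move=> [[P lP cP] hmin]; split; first by exists P.
  by move=> j [P' [lP' <-]]; apply: hmin.
move=> [[P [lP cP]] hmin]; split; first by exists P.
by move=> P' lP'; apply: hmin; exists P'.
Qed.

Section IVT.
Variables a b m0 k0 : nat.
Hypothesis a_gt0 : 0 < a.
Hypothesis base : Q a m0 k0.
Hypothesis k0b : k0 <= b.

Lemma Q_shift d : Q a (m0 + d) (k0 + d).
Proof.
elim: d => [|d [P [lP cP]]]; first by rewrite !addn0.
have [lP' cP'] := step_ok lP.
by rewrite !addnS; exists (Pstep P); rewrite cP' cP.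
Qed.

Lemma ivt d : (exists m, m0 <= m /\ partition_dimension (@G a m) b) \/
              (forall k, partition_dimension (@G a (m0 + d)) k -> k < b).
Proof.
elim: d => [|d IH].
  have [k [Qk hk]] := ex_min (Q_shift 0).
  have kb : k <= b by have := hk _ (Q_shift 0); lia.
  case: (eqVneq k b) => [e|ne].
    by left; exists (m0 + 0); split; [lia|]; apply/PD_Q; rewrite -e.
  right => k' /PD_Q [Qk' hk'].
  have : k = k' by apply/eqP; rewrite eqn_leq hk // hk'.
  by move=> <-; rewrite ltn_neqAle ne kb.
case: IH => [//|IH]; first by left.
have [k [Qk hk]] := ex_min (Q_shift d).
have kb : k < b by apply: IH; apply/PD_Q.
have [P [lP cP]] := Qk.
have [lP' cP'] := step_ok lP.
have Q1 : Q a (m0 + d.+1) k.+1 by rewrite addnS; exists (Pstep P); rewrite cP' cP.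
have [k' [Qk' hk']] := ex_min Q1.
have k'b : k' <= b by have := hk' _ Q1; lia.
case: (eqVneq k' b) => [e|ne].
  by left; exists (m0 + d.+1); split; [lia|]; apply/PD_Q; rewrite -e.
right => k'' /PD_Q [Qk'' hk''].
have : k' = k'' by apply/eqP; rewrite eqn_leq hk' // hk''.
by move=> <-; rewrite ltn_neqAle ne k'b.
Qed.

Lemma ivt_final : exists m, m0 <= m /\ partition_dimension (@G a m) b.
Proof.
case: (ivt (b * b).+1) => // H.
have [k [Qk hk]] := ex_min (Q_shift (b * b).+1).
have kb : k < b by apply: H; apply/PD_Q.
have [P [lP cP]] := Qk.
have := lower_bound lP; rewrite cP.
have : k * k <= b * b by apply: leq_mul; lia.
lia.
Qed.
End IVT.

End N.
Import N.


Definition e1 : rel 'I_1 := fun _ _ => false.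

Lemma I1_eq (x y : 'I_1) : x = y.
Proof. by apply: ord_inj; case: x => [[|//] ?]; case: y => [[|//] ?]. Qed.

Lemma e1_tree : is_tree e1.
Proof.
split.
- by split.
- split; first by rewrite card_ord.
  by move=> x y; rewrite (I1_eq x y) connect0.
- move=> s us ss; exfalso.
  have := max_card (mem s); rewrite card_ord (card_uniqP us); lia.
Qed.

Lemma e1_twin : twin_number e1 = 1.
Proof.
rewrite /twin_number big_ord1.
have -> : [set v | twins e1 ord0 v] = [set: 'I_1].
  by apply/setP => v; rewrite !inE (I1_eq v ord0) /twins eqxx.
by rewrite cardsT card_ord.
Qed.

Lemma e1_pd : partition_dimension e1 1.
Proof.
split.
  exists [set [set: 'I_1]]; last by rewrite cards1.
  split.
    rewrite /partition cover1 eqxx trivIset1 /= inE eq_sym.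
    by apply/set0Pn; exists ord0.
  by move=> u v; rewrite (I1_eq u v) eqxx.
move=> P [pP _]; rewrite card_gt0; apply/set0Pn.
have : ord0 \in cover P by rewrite (cover_partition pP) inE.
by case/bigcupP => S SP _; exists S.
Qed.

Theorem theorem8 (a b : nat) : 1 <= a <= b ->
  exists (n : nat) (e : rel 'I_n),
    is_tree e /\ twin_number e = a /\ partition_dimension e b.
Proof.
move=> /andP[a1 ab].
case: (eqVneq b 1) => [eb|nb1].
  have ea : a = 1 by lia.
  by exists 1, e1; rewrite ea eb; split; [exact: e1_tree | split; [exact: e1_twin | exact: e1_pd]].
have [m0 [k0 [base k0b am0]]] : exists m0 k0, [/\ Q a m0 k0, k0 <= b & 1 < a + m0].
  case: a a1 ab => [//|[|c]] _ ab.
  - exists 1, 2; split => //; [exact: base1 | lia].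
  - exists 0, c.+2; split => //; exact: base2.
have [m [mm pd]] := ivt_final a1 base k0b.
exists (NN a m), (@G a m); split; first exact: G_tree.
split => //; apply: G_twin => //; lia.
Qed.
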